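(* Let $\Omega\subseteq\mathbb{C}$ be a domain, let $\omega\in H(\Omega)$ and let $\varphi:\Omega\to\Omega$ be holomorphic. Then the weighted composition operator $C_{\omega,\varphi}:H(\Omega)\to H(\Omega)$, $f\mapsto\omega\cdot(f\circ\varphi)$, does not support a supercyclic algebra.
   Context: $H(\Omega)$ is the Fréchet algebra of holomorphic functions on $\Omega$ with the compact-open topology. A vector $f$ is supercyclic for an operator $T$ if $\{\lambda T^nf:\lambda\in\mathbb{C},n\ge0\}$ is dense. $T$ supports a supercyclic algebra if there is a subalgebra $A\ne\{0\}$ of $H(\Omega)$ all of whose nonzero elements are supercyclic for $T$. *)

(* Defs.v *)
From Stdlib Require Import Reals List.
From Coquelicot Require Import Coquelicot.
Open Scope C_scope.

Definition connected_set (D : C -> Prop) : Prop :=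
  forall U V : C -> Prop, open U -> open V ->
    (forall z, D z -> U z \/ V z) ->
    (exists z, D z /\ U z) -> (exists z, D z /\ V z) ->
    exists z, D z /\ U z /\ V z.

Definition is_domain (D : C -> Prop) : Prop :=
  open D /\ connected_set D /\ exists z, D z.

(* Complex differentiability at every point of D. Elements of H(D) are
   represented by total functions C -> C, only their values on D matter. *)
Definition holomorphic_on (D : C -> Prop) (f : C -> C) : Prop :=
  forall z, D z -> @ex_derive C_AbsRing C_NormedModule f z.

Definition compact_set (K : C -> Prop) : Prop :=
  forall (I : Type) (U : I -> C -> Prop),
    (forall i, open (U i)) -> (forall z, K z -> exists i, U i z) ->
    exists l : list I, forall z, K z -> exists i, In i l /\ U i z.

Definition wcomp (w phi : C -> C) (f : C -> C) : C -> C :=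
  fun z => w z * f (phi z).

(* f is supercyclic for T on H(D): {lambda T^n f} is dense in H(D) for the
   compact-open topology, i.e. every g in H(D) is approximated uniformly on
   every compact subset of D. *)
Definition supercyclic (D : C -> Prop) (T : (C -> C) -> (C -> C))
    (f : C -> C) : Prop :=
  forall g : C -> C, holomorphic_on D g ->
  forall K : C -> Prop, compact_set K -> (forall z, K z -> D z) ->
  forall eps : R, (0 < eps)%R ->
  exists (lam : C) (n : nat), forall z, K z ->
    (Cmod (lam * Nat.iter n T f z - g z) < eps)%R.

(* Subalgebra of H(D) (not required to be unital). *)
Definition subalgebra_H (D : C -> Prop) (A : (C -> C) -> Prop) : Prop :=
  (forall f, A f -> holomorphic_on D f) /\
  A (fun _ => 0) /\
  (forall f g, A f -> A g -> A (fun z => f z + g z)) /\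
  (forall (c : C) f, A f -> A (fun z => c * f z)) /\
  (forall f g, A f -> A g -> A (fun z => f z * g z)).

Definition nonzero_on (D : C -> Prop) (f : C -> C) : Prop :=
  exists z, D z /\ f z <> 0.

Definition supports_supercyclic_algebra (D : C -> Prop)
    (T : (C -> C) -> (C -> C)) : Prop :=
  exists A : (C -> C) -> Prop,
    subalgebra_H D A /\ (exists f, A f /\ nonzero_on D f) /\
    forall f, A f -> nonzero_on D f -> supercyclic D T f.

(* Main.v *)
Require Import Defs.
From Stdlib Require Import Reals Lra Psatz Classical ClassicalEpsilon List.
From Coquelicot Require Import Coquelicot.
Open Scope C_scope.

Lemma Cmod_sqr_comp (z : C) : (Cmod z * Cmod z = Re z * Re z + Im z * Im z)%R.
Proof. pose proof (Cmod2_alt z). simpl in H. lra. Qed.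

Lemma Re_le_Cmod (z : C) : (Rabs (Re z) <= Cmod z)%R.
Proof. apply re_le_Cmod. Qed.

Lemma Im_le_Cmod (z : C) : (Rabs (Im z) <= Cmod z)%R.
Proof.
  pose proof (Cmod_sqr_comp z). pose proof (Cmod_ge_0 z).
  rewrite <- (Rabs_pos_eq (Cmod z)) by lra.
  apply Rsqr_le_abs_0. unfold Rsqr. nra.
Qed.

Lemma Cmod_le_sum (z : C) : (Cmod z <= Rabs (Re z) + Rabs (Im z))%R.
Proof.
  pose proof (Cmod_sqr_comp z). pose proof (Cmod_ge_0 z).
  pose proof (Rabs_pos (Re z)). pose proof (Rabs_pos (Im z)).
  apply Rsqr_incr_0_var; [|lra]. unfold Rsqr.
  assert (Re z * Re z = Rabs (Re z) * Rabs (Re z))%R.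
  { rewrite <- Rabs_mult. rewrite Rabs_pos_eq; nra. }
  assert (Im z * Im z = Rabs (Im z) * Rabs (Im z))%R.
  { rewrite <- Rabs_mult. rewrite Rabs_pos_eq; nra. }
  nra.
Qed.

Lemma Cmod_RtoC (a : R) : Cmod (RtoC a) = Rabs a.
Proof. apply Cmod_R. Qed.

Lemma Cmod_sub_sym (x y : C) : Cmod (x - y) = Cmod (y - x).
Proof. replace (x - y) with (- (y - x)) by ring. apply Cmod_opp. Qed.

Lemma Cmod_tri3 (x y z : C) : (Cmod (x - z) <= Cmod (x - y) + Cmod (y - z))%R.
Proof. replace (x - z) with ((x - y) + (y - z)) by ring. apply Cmod_triangle. Qed.

Lemma Cmod_rev_tri (x y : C) : (Rabs (Cmod x - Cmod y) <= Cmod (x - y))%R.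
Proof.
  pose proof (Cmod_triangle (x - y) y). pose proof (Cmod_triangle (y - x) x).
  replace (x - y + y) with x in H by ring. replace (y - x + x) with y in H0 by ring. rewrite Cmod_sub_sym in H0.
  apply Rabs_le. split; lra.
Qed.

Lemma Cmod_nz (x : C) : x <> 0 -> (0 < Cmod x)%R.
Proof. intro. apply Cmod_gt_0. auto. Qed.
Definition ctd {X : Type} (d : X -> X -> R) (f : X -> C) (x : X) : Prop :=
  forall eps, (0 < eps)%R -> exists del, (0 < del)%R /\
    forall y, (d y x < del)%R -> (Cmod (f y - f x) < eps)%R.

Definition dC (y x : C) : R := Cmod (y - x).
Definition dR (y x : R) : R := Rabs (y - x).

Lemma ctd_const {X} d (c : C) (x : X) : ctd d (fun _ => c) x.
Proof.
  intros e He. exists 1%R. split; [lra|]. intros y _.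
  replace (c - c) with (RtoC 0) by ring. rewrite Cmod_0. lra.
Qed.

Lemma ctd_id_C (x : C) : ctd dC (fun z => z) x.
Proof. intros e He. exists e. split; auto. Qed.

Lemma ctd_plus {X} d (f g : X -> C) x :
  ctd d f x -> ctd d g x -> ctd d (fun y => f y + g y) x.
Proof.
  intros Hf Hg e He.
  destruct (Hf (e/2)%R) as [d1 [Hd1 H1]]; [lra|].
  destruct (Hg (e/2)%R) as [d2 [Hd2 H2]]; [lra|].
  exists (Rmin d1 d2). split; [apply Rmin_pos; auto|]. intros y Hy.
  pose proof (H1 y (Rlt_le_trans _ _ _ Hy (Rmin_l _ _))).
  pose proof (H2 y (Rlt_le_trans _ _ _ Hy (Rmin_r _ _))).
  replace (f y + g y - (f x + g x)) with ((f y - f x) + (g y - g x)) by ring.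
  pose proof (Cmod_triangle (f y - f x) (g y - g x)). lra.
Qed.

Lemma ctd_opp {X} d (f : X -> C) x : ctd d f x -> ctd d (fun y => - f y) x.
Proof.
  intros Hf e He. destruct (Hf e He) as [d1 [Hd1 H1]]. exists d1. split; auto.
  intros y Hy. replace (- f y - - f x) with (- (f y - f x)) by ring.
  rewrite Cmod_opp. auto.
Qed.

Lemma ctd_mult {X} d (f g : X -> C) x :
  ctd d f x -> ctd d g x -> ctd d (fun y => f y * g y) x.
Proof.
  intros Hf Hg e He.
  set (a := Cmod (f x)). set (b := Cmod (g x)).
  assert (Ha : (0 <= a)%R) by apply Cmod_ge_0.
  assert (Hb : (0 <= b)%R) by apply Cmod_ge_0.
  destruct (Hf (Rmin 1 (e / (2 * (b + 1))))) as [d1 [Hd1 H1]].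
  { apply Rmin_pos; [lra|]. apply Rdiv_lt_0_compat; lra. }
  destruct (Hg (e / (2 * (a + 1)))%R) as [d2 [Hd2 H2]].
  { apply Rdiv_lt_0_compat; lra. }
  exists (Rmin d1 d2). split; [apply Rmin_pos; auto|]. intros y Hy.
  pose proof (H1 y (Rlt_le_trans _ _ _ Hy (Rmin_l _ _))) as E1.
  pose proof (H2 y (Rlt_le_trans _ _ _ Hy (Rmin_r _ _))) as E2.
  replace (f y * g y - f x * g x) with (f y * (g y - g x) + (f y - f x) * g x) by ring.
  eapply Rle_lt_trans; [apply Cmod_triangle|]. rewrite !Cmod_mult.
  fold b.
  assert (Hfy : (Cmod (f y) <= a + 1)%R).
  { pose proof (Cmod_rev_tri (f y) (f x)). fold a in H.
    pose proof (Rmin_l 1 (e / (2 * (b + 1)))).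
    pose proof (Rle_abs (Cmod (f y) - a)). lra. }
  assert (Q1 : (Cmod (f y - f x) * b <= e / (2 * (b + 1)) * b)%R).
  { apply Rmult_le_compat_r; auto. pose proof (Rmin_r 1 (e / (2 * (b + 1)))). lra. }
  assert (Q2 : (Cmod (f y) * Cmod (g y - g x) <= (a + 1) * (e / (2 * (a + 1))))%R).
  { apply Rmult_le_compat; try apply Cmod_ge_0; lra. }
  assert (Q3 : ((a + 1) * (e / (2 * (a + 1))) = e / 2)%R) by (field; lra).
  assert (Q4 : (e / (2 * (b + 1)) * b < e / 2)%R).
  { unfold Rdiv. rewrite Rinv_mult. 
    assert (0 < / (b+1))%R by (apply Rinv_0_lt_compat; lra).
    assert (b * / (b + 1) < 1)%R.
    { apply (Rmult_lt_reg_r (b + 1)); [lra|]. rewrite Rmult_assoc, Rinv_l by lra. lra. }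
    nra. }
  lra.
Qed.

Lemma ctd_inv {X} d (f : X -> C) x :
  ctd d f x -> f x <> 0 -> ctd d (fun y => / f y) x.
Proof.
  intros Hf Hnz e He.
  set (a := Cmod (f x)). assert (Ha : (0 < a)%R) by (apply Cmod_nz; auto).
  destruct (Hf (Rmin (a/2) (e * a * a / 2))) as [d1 [Hd1 H1]].
  { apply Rmin_pos; [lra|]. apply Rdiv_lt_0_compat; [|lra]. repeat apply Rmult_lt_0_compat; lra. }
  exists d1. split; auto. intros y Hy. pose proof (H1 y Hy) as E.
  pose proof (Rmin_l (a/2) (e * a * a / 2)). pose proof (Rmin_r (a/2) (e * a * a / 2)).
  assert (Hfy : (a / 2 < Cmod (f y))%R).
  { pose proof (Cmod_rev_tri (f y) (f x)) as R1. fold a in R1.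
    pose proof (Rle_abs (- (Cmod (f y) - a))) as R2. rewrite Rabs_Ropp in R2. lra. }
  assert (Hnzy : f y <> 0). { intro Z. rewrite Z, Cmod_0 in Hfy. lra. }
  replace (/ f y - / f x) with ((f x - f y) / (f y * f x)) by (field; auto).
  rewrite Cmod_div by (apply Cmult_neq_0; auto). rewrite Cmod_mult, Cmod_sub_sym. fold a.
  apply (Rmult_lt_reg_r (Cmod (f y) * a)). { apply Rmult_lt_0_compat; lra. }
  unfold Rdiv. rewrite Rmult_assoc, Rinv_l by (apply Rgt_not_eq; apply Rmult_lt_0_compat; lra).
  assert (e * (a/2) * a <= e * Cmod (f y) * a)%R.
  { apply Rmult_le_compat_r; [lra|]. apply Rmult_le_compat_l; lra. }
  lra.
Qed.

Lemma ctd_comp {X} d (f : X -> C) (h : C -> C) x :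
  ctd d f x -> ctd dC h (f x) -> ctd d (fun y => h (f y)) x.
Proof.
  intros Hf Hh e He. destruct (Hh e He) as [d1 [Hd1 H1]].
  destruct (Hf d1 Hd1) as [d2 [Hd2 H2]]. exists d2. split; auto.
  intros y Hy. apply H1. unfold dC. apply H2. auto.
Qed.

Lemma ctd_div {X} d (f g : X -> C) x :
  ctd d f x -> ctd d g x -> g x <> 0 -> ctd d (fun y => f y / g y) x.
Proof. intros. unfold Cdiv. apply ctd_mult; auto. apply ctd_inv; auto. Qed.

Lemma C_ext (x y : C) : Re x = Re y -> Im x = Im y -> x = y.
Proof. destruct x, y. simpl. intros -> ->. reflexivity. Qed.

Lemma ctd_ext {X} d (f g : X -> C) x : (forall y, f y = g y) -> ctd d f x -> ctd d g x.
Proof.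
  intros E Hf e He. destruct (Hf e He) as [d1 [Hd1 H1]]. exists d1. split; auto.
  intros y Hy. rewrite <- !E. auto.
Qed.

Lemma Cmod_RtoC_diff (a b : R) : Cmod (RtoC a - RtoC b) = Rabs (a - b).
Proof. rewrite <- RtoC_minus. apply Cmod_R. Qed.

Lemma ctd_Rcomp {X} d (k : X -> R) (phi : R -> R) x :
  ctd d (fun y => RtoC (k y)) x -> continuity_pt phi (k x) ->
  ctd d (fun y => RtoC (phi (k y))) x.
Proof.
  intros Hk Hp e He. destruct (Hp e He) as [d1 [Hd1 H1]].
  destruct (Hk d1 Hd1) as [d2 [Hd2 H2]]. exists d2. split; auto.
  intros y Hy. specialize (H2 y Hy). rewrite Cmod_RtoC_diff in H2 |- *.
  destruct (Req_dec (k y) (k x)) as [E|E].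
  - rewrite E. replace (phi (k x) - phi (k x))%R with 0%R by ring. rewrite Rabs_R0. auto.
  - apply (H1 (k y)). split; [split; [exact I| auto]|]. simpl. unfold R_dist. auto.
Qed.

Lemma ctd_Cmod (x : C) : ctd dC (fun z => RtoC (Cmod z)) x.
Proof.
  intros e He. exists e. split; auto. intros y Hy. rewrite Cmod_RtoC_diff.
  eapply Rle_lt_trans; [apply Cmod_rev_tri|]. auto.
Qed.

Lemma ctd_Re (x : C) : ctd dC (fun z => RtoC (Re z)) x.
Proof.
  intros e He. exists e. split; auto. intros y Hy. rewrite Cmod_RtoC_diff.
  eapply Rle_lt_trans; [|apply Hy]. unfold dC.
  replace (Re y - Re x)%R with (Re (y - x)) by (destruct x, y; simpl; ring).
  apply Re_le_Cmod.
Qed.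

Definition psqrt (x : C) : C :=
  (x + RtoC (Cmod x)) / RtoC (sqrt (2 * (Cmod x + Re x))).

Lemma Re_div_R (z : C) (s : R) : s <> 0%R -> Re (z / RtoC s) = (Re z / s)%R.
Proof. intros. destruct z. unfold Cdiv, Cmult, Cinv, RtoC; simpl. field. auto. Qed.

Lemma Re_inv (z : C) : Re (/ z) = (Re z / (Re z * Re z + Im z * Im z))%R.
Proof. destruct z. unfold Cinv; simpl. rewrite !Rmult_1_r. reflexivity. Qed.

Lemma Re_pos_mod (x : C) : (0 < Re x)%R -> (0 < Cmod x + Re x)%R.
Proof. intros. pose proof (Cmod_ge_0 x). lra. Qed.

Lemma psqrt_sq (x : C) : (0 < Cmod x + Re x)%R -> psqrt x * psqrt x = x.
Proof.
  intros H. unfold psqrt.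
  set (S := sqrt (2 * (Cmod x + Re x))).
  assert (HS : (0 < S)%R) by (apply sqrt_lt_R0; lra).
  assert (HSS : (S * S = 2 * (Cmod x + Re x))%R) by (apply sqrt_sqrt; lra).
  assert (E : (x + RtoC (Cmod x)) * (x + RtoC (Cmod x)) = x * RtoC (S * S)).
  { rewrite HSS. pose proof (Cmod_sqr_comp x). destruct x as [a b]. simpl in *.
    apply C_ext; simpl; nra. }
  assert (RtoC S <> 0). { intro Z. apply RtoC_inj in Z. lra. }
  transitivity ((x + RtoC (Cmod x)) * (x + RtoC (Cmod x)) / (RtoC S * RtoC S)).
  { field. auto. }
  rewrite E, RtoC_mult. field. intro Z. apply RtoC_inj in Z. nra.
Qed.

Lemma psqrt_re (x : C) : (0 < Cmod x + Re x)%R -> (0 < Re (psqrt x))%R.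
Proof.
  intros H. unfold psqrt.
  set (S := sqrt (2 * (Cmod x + Re x))).
  assert (HS : (0 < S)%R) by (apply sqrt_lt_R0; lra).
  rewrite Re_div_R by lra.
  replace (Re (x + RtoC (Cmod x))) with (Re x + Cmod x)%R by (destruct x; simpl; ring).
  apply Rdiv_lt_0_compat; lra.
Qed.

Lemma sq_unique (y p : C) : y * y = p * p -> (0 < Re y)%R -> (0 < Re p)%R -> y = p.
Proof.
  intros E Hy Hp.
  assert (H : (y - p) * (y + p) = y * y - p * p) by ring.
  rewrite E in H. replace (p * p - p * p) with (RtoC 0) in H by ring.
  assert (Hn : y + p <> 0).
  { intro Z. assert (Re (y + p) = 0%R) by (rewrite Z; reflexivity).
    destruct y, p; simpl in *. lra. }
  destruct (classic (y - p = 0)) as [Z|Z].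
  - apply Ceq_minus. auto.
  - exfalso. exact (Cmult_neq_0 _ _ Z Hn H).
Qed.

Lemma Re_inv_pos (p : C) : (0 < Re p)%R -> (0 < Re (/ p))%R.
Proof.
  intros H. rewrite Re_inv. apply Rdiv_lt_0_compat; auto.
  pose proof (Rle_0_sqr (Im p)). unfold Rsqr in H0. nra.
Qed.

Lemma Re_nz (p : C) : (0 < Re p)%R -> p <> 0.
Proof. intros H Z. rewrite Z in H. simpl in H. lra. Qed.

Lemma psqrt_inv (x : C) : (0 < Re x)%R -> psqrt (/ x) * psqrt x = 1.
Proof.
  intros H. set (p := psqrt x).
  assert (Hp : (0 < Re p)%R) by (apply psqrt_re, Re_pos_mod; auto).
  assert (Hpp : p * p = x) by (apply psqrt_sq, Re_pos_mod; auto).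
  assert (Hx : x <> 0) by (apply Re_nz; auto).
  assert (Hpn : p <> 0) by (apply Re_nz; auto).
  assert (E : psqrt (/ x) = / p).
  { apply sq_unique.
    - rewrite psqrt_sq. rewrite <- Hpp. field. auto.
      apply Re_pos_mod, Re_inv_pos; auto.
    - apply psqrt_re, Re_pos_mod, Re_inv_pos; auto.
    - apply Re_inv_pos; auto. }
  rewrite E. field. auto.
Qed.

Lemma ctd_psqrt (x : C) : (0 < Re x)%R -> ctd dC psqrt x.
Proof.
  intros H. unfold psqrt. apply ctd_div.
  - apply ctd_plus; [apply ctd_id_C | apply ctd_Cmod].
  - apply (ctd_Rcomp dC (fun z => 2 * (Cmod z + Re z))%R sqrt).
    + apply (ctd_ext _ (fun z => RtoC 2 * (RtoC (Cmod z) + RtoC (Re z)))).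
      { intros y. rewrite <- RtoC_plus, <- RtoC_mult. reflexivity. }
      apply ctd_mult; [apply ctd_const|]. apply ctd_plus; [apply ctd_Cmod|apply ctd_Re].
    + apply continuity_pt_sqrt. pose proof (Re_pos_mod x H). lra.
  - intro Z. apply RtoC_inj in Z. pose proof (Re_pos_mod x H).
    assert (0 < sqrt (2 * (Cmod x + Re x)))%R by (apply sqrt_lt_R0; lra). lra.
Qed.

Lemma Cinv_neq_0 (x : C) : x <> 0 -> / x <> 0.
Proof.
  intros H Z. assert (Cmod (/ x) = 0%R) by (rewrite Z; apply Cmod_0).
  rewrite Cmod_inv in H0 by auto. pose proof (Cmod_nz x H).
  pose proof (Rinv_0_lt_compat _ H1). lra.
Qed.

Definition ee (t : R) : C := (cos t, sin t).
Definition cpt (z0 : C) (r s t : R) : C := z0 + RtoC (s * r) * ee t.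
Definition cmt (z0 : C) (r s t : R) : C := z0 - RtoC (s * r) * ee t.

Lemma Cmod_ee t : Cmod (ee t) = 1%R.
Proof.
  unfold Cmod, ee; simpl. transitivity (sqrt 1); [|apply sqrt_1]. f_equal.
  pose proof (sin2_cos2 t). unfold Rsqr in H. rewrite !Rmult_1_r. lra.
Qed.

Lemma ee_0 : ee 0 = 1.
Proof. unfold ee. rewrite cos_0, sin_0. reflexivity. Qed.

Lemma ee_PI : ee PI = - 1.
Proof. unfold ee. rewrite cos_PI, sin_PI. apply C_ext; simpl; ring. Qed.

Lemma cmt_PI z0 r s : cmt z0 r s PI = cpt z0 r s 0.
Proof. unfold cmt, cpt. rewrite ee_PI, ee_0. ring. Qed.

Lemma cpt_PI z0 r s : cpt z0 r s PI = cmt z0 r s 0.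
Proof. unfold cmt, cpt. rewrite ee_PI, ee_0. ring. Qed.

Lemma cpt_dist z0 r s t : (0 <= r)%R -> (0 <= s <= 1)%R -> (Cmod (cpt z0 r s t - z0) <= r)%R.
Proof.
  intros Hr Hs. unfold cpt. replace (z0 + RtoC (s * r) * ee t - z0) with (RtoC (s*r) * ee t) by ring.
  rewrite Cmod_mult, Cmod_ee, Cmod_R, Rmult_1_r. rewrite Rabs_pos_eq by nra. nra.
Qed.

Lemma cmt_dist z0 r s t : (0 <= r)%R -> (0 <= s <= 1)%R -> (Cmod (cmt z0 r s t - z0) <= r)%R.
Proof.
  intros Hr Hs. unfold cmt. replace (z0 - RtoC (s * r) * ee t - z0) with (- (RtoC (s*r) * ee t)) by ring.
  rewrite Cmod_opp, Cmod_mult, Cmod_ee, Cmod_R, Rmult_1_r. rewrite Rabs_pos_eq by nra. nra.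
Qed.

Lemma cont_pt_eps (f : R -> R) x : continuity_pt f x ->
  forall e, (0 < e)%R -> exists d, (0 < d)%R /\ forall y, (Rabs (y - x) < d)%R -> (Rabs (f y - f x) < e)%R.
Proof.
  intros H e He. destruct (H e He) as [d [Hd H1]]. exists d. split; auto.
  intros y Hy. destruct (Req_dec y x) as [->|E].
  - replace (f x - f x)%R with 0%R by ring. rewrite Rabs_R0. auto.
  - apply (H1 y). split; [split; [exact I|auto]|]. simpl. unfold R_dist. auto.
Qed.

Lemma ctd_ee t : ctd dR ee t.
Proof.
  intros e He.
  destruct (cont_pt_eps cos t (continuity_cos t) (e/2)) as [d1 [Hd1 H1]]; [lra|].
  destruct (cont_pt_eps sin t (continuity_sin t) (e/2)) as [d2 [Hd2 H2]]; [lra|].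
  exists (Rmin d1 d2). split; [apply Rmin_pos; auto|]. intros y Hy. unfold dR in Hy.
  pose proof (H1 y (Rlt_le_trans _ _ _ Hy (Rmin_l _ _))).
  pose proof (H2 y (Rlt_le_trans _ _ _ Hy (Rmin_r _ _))).
  eapply Rle_lt_trans; [apply Cmod_le_sum|]. unfold ee. simpl. unfold Rminus in *. lra.
Qed.

Lemma ctd_cpt z0 r s t : ctd dR (cpt z0 r s) t.
Proof.
  unfold cpt. apply ctd_plus; [apply ctd_const|]. apply ctd_mult; [apply ctd_const|apply ctd_ee].
Qed.

Lemma ctd_cmt z0 r s t : ctd dR (cmt z0 r s) t.
Proof.
  unfold cmt. unfold Cminus. apply ctd_plus; [apply ctd_const|]. apply ctd_opp.
  apply ctd_mult; [apply ctd_const|apply ctd_ee].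
Qed.

Definition Good (u : C -> C) (z0 : C) (r s : R) : Prop :=
  exists sg : R -> C,
    (forall t, (0 <= t <= PI)%R -> ctd dR sg t) /\
    (forall t, (0 <= t <= PI)%R -> sg t * sg t = u (cmt z0 r s t) / u (cpt z0 r s t)) /\
    sg 0%R * sg PI = 1.

Definition disk_ok (u : C -> C) (z0 : C) (r : R) : Prop :=
  forall z, (Cmod (z - z0) <= r)%R -> ctd dC u z /\ u z <> 0.

Definition rho (u : C -> C) z0 r s s' t : C :=
  (u (cmt z0 r s' t) / u (cpt z0 r s' t)) / (u (cmt z0 r s t) / u (cpt z0 r s t)).

Lemma Good0 u z0 r : (0 <= r)%R -> disk_ok u z0 r -> Good u z0 r 0.
Proof.
  intros Hr Hu. exists (fun _ => 1). split; [intros; apply ctd_const|]. split.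
  - intros t _. unfold cmt, cpt. rewrite Rmult_0_l.
    replace (z0 - RtoC 0 * ee t) with z0 by ring. replace (z0 + RtoC 0 * ee t) with z0 by ring.
    field. apply Hu. replace (z0 - z0) with (RtoC 0) by ring. rewrite Cmod_0. auto.
  - ring.
Qed.

Lemma good_step u z0 r s s' : (0 <= r)%R -> disk_ok u z0 r ->
  (0 <= s <= 1)%R -> (0 <= s' <= 1)%R ->
  (forall t, (0 <= t <= PI)%R -> (0 < Re (rho u z0 r s s' t))%R) ->
  Good u z0 r s -> Good u z0 r s'.
Proof.
  intros Hr Hu Hs Hs' Hrho [sg [Hc [Hsq Hend]]].
  assert (Nz : forall s1 t, (0 <= s1 <= 1)%R -> u (cpt z0 r s1 t) <> 0 /\ u (cmt z0 r s1 t) <> 0).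
  { intros s1 t Hs1. split; apply Hu; [apply cpt_dist|apply cmt_dist]; auto. }
  assert (Cu : forall s1 t, (0 <= s1 <= 1)%R -> ctd dR (fun t => u (cpt z0 r s1 t)) t /\ ctd dR (fun t => u (cmt z0 r s1 t)) t).
  { intros s1 t Hs1. split; apply ctd_comp; try apply ctd_cpt; try apply ctd_cmt; apply Hu;
      [apply cpt_dist|apply cmt_dist]; auto. }
  exists (fun t => sg t * psqrt (rho u z0 r s s' t)). split; [|split].
  - intros t Ht. apply ctd_mult; [apply Hc; auto|].
    apply ctd_comp; [|apply ctd_psqrt; apply Hrho; auto].
    destruct (Nz s t Hs), (Nz s' t Hs'), (Cu s t Hs), (Cu s' t Hs').
    unfold rho. apply ctd_div; [apply ctd_div; auto|apply ctd_div; auto|].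
    unfold Cdiv. apply Cmult_neq_0; auto. apply Cinv_neq_0. auto.
  - intros t Ht.
    transitivity ((sg t * sg t) * (psqrt (rho u z0 r s s' t) * psqrt (rho u z0 r s s' t))); [ring|].
    rewrite psqrt_sq by (apply Re_pos_mod, Hrho; auto). rewrite Hsq by auto.
    destruct (Nz s t Hs), (Nz s' t Hs'). unfold rho. field. auto.
  - assert (Hp : (0 <= PI)%R) by (pose proof PI_RGT_0; lra).
    assert (E : rho u z0 r s s' PI = / rho u z0 r s s' 0).
    { unfold rho. rewrite !cmt_PI, !cpt_PI. destruct (Nz s 0%R Hs), (Nz s' 0%R Hs'). field. auto. }
    transitivity ((sg 0%R * sg PI) * (psqrt (rho u z0 r s s' PI) * psqrt (rho u z0 r s s' 0))); [ring|].
    rewrite Hend, E, psqrt_inv; [ring|]. apply Hrho. lra.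
Qed.

Lemma ratio_close (m x1 x2 : C) : m <> 0 ->
  (Cmod (x1 - m) < Cmod m / 10)%R -> (Cmod (x2 - m) < Cmod m / 10)%R ->
  (Cmod (x1 / x2 - 1) < 1/4)%R.
Proof.
  intros Hm H1 H2. pose proof (Cmod_nz m Hm) as Pm.
  assert (Hx2 : (9 * Cmod m / 10 < Cmod x2)%R).
  { pose proof (Cmod_rev_tri x2 m). pose proof (Rle_abs (- (Cmod x2 - Cmod m))).
    rewrite Rabs_Ropp in H0. lra. }
  assert (Nx2 : x2 <> 0). { intro Z. rewrite Z, Cmod_0 in Hx2. lra. }
  replace (x1 / x2 - 1) with ((x1 - x2) / x2) by (field; auto).
  rewrite Cmod_div by auto.
  assert (Hd : (Cmod (x1 - x2) < Cmod m / 5)%R).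
  { pose proof (Cmod_tri3 x1 m x2). rewrite (Cmod_sub_sym m x2) in H. lra. }
  apply (Rmult_lt_reg_r (Cmod x2)); [lra|].
  unfold Rdiv at 1. rewrite Rmult_assoc, Rinv_l by lra. lra.
Qed.

Lemma prod_re_pos (p q : C) : (Cmod (p - 1) < 1/4)%R -> (Cmod (q - 1) < 1/4)%R ->
  (0 < Re (p * q))%R.
Proof.
  intros Hp Hq.
  pose proof (Re_le_Cmod (p - 1)). pose proof (Im_le_Cmod (p - 1)).
  pose proof (Re_le_Cmod (q - 1)). pose proof (Im_le_Cmod (q - 1)).
  destruct p as [a b], q as [c e]. simpl in *.
  rewrite Ropp_0, Rplus_0_r in H0, H2.
  pose proof (Rle_abs (a + - (1))). pose proof (Rle_abs (- (a + - (1)))). rewrite Rabs_Ropp in H4.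
  pose proof (Rle_abs b). pose proof (Rle_abs (- b)). rewrite Rabs_Ropp in H6.
  pose proof (Rle_abs (c + - (1))). pose proof (Rle_abs (- (c + - (1)))). rewrite Rabs_Ropp in H8.
  pose proof (Rle_abs e). pose proof (Rle_abs (- e)). rewrite Rabs_Ropp in H10.
  assert (-1/4 < b < 1/4)%R by (split; lra).
  assert (-1/4 < e < 1/4)%R by (split; lra).
  assert (3/4 < a)%R by lra. assert (3/4 < c)%R by lra.
  nra.
Qed.

Lemma near_bound (r s t U V : R) : (0 <= r)%R -> (Rabs U <= 1)%R ->
  (Cmod (RtoC (s * r) * ee t - RtoC (U * r) * ee V) <= Rabs (s - U) * r + r * Cmod (ee t - ee V))%R.
Proof.
  intros Hr HU.
  replace (RtoC (s * r) * ee t - RtoC (U * r) * ee V) with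
    (RtoC ((s - U) * r) * ee t + RtoC (U * r) * (ee t - ee V))
    by (rewrite !RtoC_mult, RtoC_minus; ring).
  eapply Rle_trans; [apply Cmod_triangle|].
  rewrite !Cmod_mult, Cmod_ee, !Cmod_R, !Rabs_mult, (Rabs_pos_eq r) by lra.
  pose proof (Cmod_ge_0 (ee t - ee V)).
  assert (Rabs U * r * Cmod (ee t - ee V) <= r * Cmod (ee t - ee V))%R.
  { rewrite Rmult_assoc. assert (0 <= r * Cmod (ee t - ee V))%R by nra. pose proof (Rabs_pos U). nra. }
  lra.
Qed.

Lemma local_delta u z0 r U V : (0 < r)%R -> disk_ok u z0 r -> (0 <= U <= 1)%R -> (0 <= V <= PI)%R ->
  exists del, (0 < del)%R /\ forall s t, (Rabs (s - U) < 2 * del)%R -> (Rabs (t - V) < 2 * del)%R ->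
   (Cmod (u (cpt z0 r s t) - u (cpt z0 r U V)) < Cmod (u (cpt z0 r U V)) / 10)%R /\
   (Cmod (u (cmt z0 r s t) - u (cmt z0 r U V)) < Cmod (u (cmt z0 r U V)) / 10)%R.
Proof.
  intros Hr Hu HU HV.
  destruct (Hu (cpt z0 r U V)) as [C1 N1]; [apply cpt_dist; lra|].
  destruct (Hu (cmt z0 r U V)) as [C2 N2]; [apply cmt_dist; lra|].
  pose proof (Cmod_nz _ N1). pose proof (Cmod_nz _ N2).
  destruct (C1 (Cmod (u (cpt z0 r U V)) / 10)%R) as [r1 [Hr1 R1]]; [lra|].
  destruct (C2 (Cmod (u (cmt z0 r U V)) / 10)%R) as [r2 [Hr2 R2]]; [lra|].
  set (rh := Rmin r1 r2). assert (Hrh : (0 < rh)%R) by (apply Rmin_pos; auto).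
  destruct (ctd_ee V (rh / (2 * r))%R) as [et [Het E]].
  { apply Rdiv_lt_0_compat; lra. }
  exists (Rmin et (rh / (2 * r)) / 2)%R. split.
  { apply Rdiv_lt_0_compat; [|lra]. apply Rmin_pos; auto. apply Rdiv_lt_0_compat; lra. }
  intros s t Hs Ht.
  replace (2 * (Rmin et (rh / (2 * r)) / 2))%R with (Rmin et (rh / (2 * r))) in Hs, Ht by field.
  assert (Hb : (Cmod (RtoC (s * r) * ee t - RtoC (U * r) * ee V) < rh)%R).
  { eapply Rle_lt_trans; [apply near_bound; [lra| rewrite Rabs_pos_eq; lra]|].
    assert (Q1 : (Cmod (ee t - ee V) < rh / (2 * r))%R).
    { apply E. unfold dR. eapply Rlt_le_trans; [apply Ht|apply Rmin_l]. }
    assert (Q2 : (Rabs (s - U) < rh / (2 * r))%R).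
    { eapply Rlt_le_trans; [apply Hs|apply Rmin_r]. }
    assert (Q3 : (Rabs (s - U) * r < rh / 2)%R).
    { apply (Rmult_lt_compat_r r) in Q2; [|lra].
      replace (rh / (2 * r) * r)%R with (rh / 2)%R in Q2 by (field; lra). lra. }
    assert (Q4 : (r * Cmod (ee t - ee V) < rh / 2)%R).
    { apply (Rmult_lt_compat_l r) in Q1; [|lra].
      replace (r * (rh / (2 * r)))%R with (rh / 2)%R in Q1 by (field; lra). lra. }
    lra. }
  split.
  - apply R1. unfold dC, cpt.
    replace (z0 + RtoC (s * r) * ee t - (z0 + RtoC (U * r) * ee V))
      with (RtoC (s * r) * ee t - RtoC (U * r) * ee V) by ring.
    eapply Rlt_le_trans; [apply Hb|apply Rmin_l].
  - apply R2. unfold dC, cmt.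
    replace (z0 - RtoC (s * r) * ee t - (z0 - RtoC (U * r) * ee V))
      with (- (RtoC (s * r) * ee t - RtoC (U * r) * ee V)) by ring.
    rewrite Cmod_opp. eapply Rlt_le_trans; [apply Hb|apply Rmin_r].
Qed.

Lemma uniform_rho u z0 r : (0 < r)%R -> disk_ok u z0 r ->
  exists d, (0 < d)%R /\ forall s s' t, (0 <= s <= 1)%R -> (0 <= s' <= 1)%R ->
    (Rabs (s - s') < d)%R -> (0 <= t <= PI)%R -> (0 < Re (rho u z0 r s s' t))%R.
Proof.
  intros Hr Hu.
  set (P := fun U V (del : posreal) => (0 <= U <= 1)%R -> (0 <= V <= PI)%R ->
     forall s t, (Rabs (s - U) < 2 * del)%R -> (Rabs (t - V) < 2 * del)%R ->
   (Cmod (u (cpt z0 r s t) - u (cpt z0 r U V)) < Cmod (u (cpt z0 r U V)) / 10)%R /\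
   (Cmod (u (cmt z0 r s t) - u (cmt z0 r U V)) < Cmod (u (cmt z0 r U V)) / 10)%R).
  assert (HP : forall U V, exists del, P U V del).
  { intros U V. destruct (classic ((0 <= U <= 1)%R /\ (0 <= V <= PI)%R)) as [[HU HV]|Hn].
    - destruct (local_delta u z0 r U V Hr Hu HU HV) as [del [Hd Hdel]].
      exists (mkposreal del Hd). intros _ _. exact Hdel.
    - exists (mkposreal 1 Rlt_0_1). intros HU HV. exfalso. auto. }
  set (delta := fun U V => proj1_sig (constructive_indefinite_description _ (HP U V))).
  assert (Hdelta : forall U V, P U V (delta U V)).
  { intros U V. unfold delta. apply (proj2_sig (constructive_indefinite_description _ (HP U V))). }
  destruct (compactness_value_2d 0 1 0 PI delta) as [d Hd].
  exists d. split; [apply cond_pos|].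
  intros s s' t Hs Hs' Hss Ht.
  apply NNPP. intro Hn. apply (Hd s t Hs Ht). intros [U [V [HU [HV [H1 [H2 H3]]]]]]. apply Hn.
  pose proof (cond_pos (delta U V)).
  destruct (Hdelta U V HU HV s t) as [A1 A2]; try lra.
  destruct (Hdelta U V HU HV s' t) as [B1 B2]; try lra.
  { assert (Rabs (s' - U) <= Rabs (s' - s) + Rabs (s - U))%R.
    { replace (s' - U)%R with ((s' - s) + (s - U))%R by ring. apply Rabs_triang. }
    rewrite Rabs_minus_sym in Hss. lra. }
  assert (Nz : forall s1 t1, (0 <= s1 <= 1)%R -> u (cpt z0 r s1 t1) <> 0 /\ u (cmt z0 r s1 t1) <> 0).
  { intros s1 t1 Hs1. split; apply Hu; [apply cpt_dist|apply cmt_dist]; auto; lra. }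
  destruct (Nz s t Hs), (Nz s' t Hs'), (Nz U V HU).
  replace (rho u z0 r s s' t) with
    ((u (cmt z0 r s' t) / u (cmt z0 r s t)) * (u (cpt z0 r s t) / u (cpt z0 r s' t)))
    by (unfold rho; field; auto).
  apply prod_re_pos.
  - apply (ratio_close (u (cmt z0 r U V))); auto.
  - apply (ratio_close (u (cpt z0 r U V))); auto.
Qed.

Lemma Rmin_diff (a b : R) : (Rabs (Rmin 1 a - Rmin 1 b) <= Rabs (a - b))%R.
Proof.
  unfold Rmin. destruct (Rle_dec 1 a), (Rle_dec 1 b);
  apply Rabs_le; pose proof (Rle_abs (a - b)); pose proof (Rle_abs (- (a - b)));
  rewrite Rabs_Ropp in *; split; lra.
Qed.

Lemma homotopy u z0 r : (0 < r)%R -> disk_ok u z0 r -> Good u z0 r 1.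
Proof.
  intros Hr Hu. destruct (uniform_rho u z0 r Hr Hu) as [d [Hd Hrho]].
  assert (Hk : forall k : nat, Good u z0 r (Rmin 1 (INR k * (d / 2)))).
  { induction k.
    - simpl. rewrite Rmult_0_l. unfold Rmin. destruct (Rle_dec 1 0); [lra|].
      apply Good0; auto; lra.
    - assert (B : forall k, (0 <= Rmin 1 (INR k * (d / 2)) <= 1)%R).
      { intro j. pose proof (pos_INR j). split; [apply Rmin_glb; nra|apply Rmin_l]. }
      apply (good_step u z0 r (Rmin 1 (INR k * (d / 2)))); auto; try lra.
      intros t Ht. apply Hrho; auto.
      eapply Rle_lt_trans; [apply Rmin_diff|]. rewrite S_INR.
      replace (INR k * (d / 2) - (INR k + 1) * (d / 2))%R with (- (d / 2))%R by ring.
      rewrite Rabs_Ropp, Rabs_pos_eq; lra. }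
  destruct (INR_unbounded (2 / d)) as [k Hkk].
  specialize (Hk k). replace (Rmin 1 (INR k * (d / 2))) with 1%R in Hk; auto.
  unfold Rmin. destruct (Rle_dec 1 (INR k * (d / 2))); auto.
  exfalso. apply n. apply (Rmult_lt_compat_r (d/2)) in Hkk; [|lra].
  replace (2 / d * (d / 2))%R with 1%R in Hkk by (field; lra). lra.
Qed.

Lemma sq_neg_re (T a b : C) : (Cmod (a - 1) < 1/2)%R -> (Cmod (b - 1) < 1/2)%R ->
  T * a = - b -> (Re T < 0)%R.
Proof.
  intros Ha Hb E.
  pose proof (Re_le_Cmod (a - 1)). pose proof (Im_le_Cmod (a - 1)).
  pose proof (Re_le_Cmod (b - 1)). pose proof (Im_le_Cmod (b - 1)).
  destruct T as [X Y], a as [a1 a2], b as [b1 b2]. simpl in *.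
  rewrite Ropp_0, Rplus_0_r in H0, H2.
  assert (E1 : (X * a1 - Y * a2 = - b1)%R) by (apply (f_equal fst) in E; simpl in E; lra).
  assert (E2 : (X * a2 + Y * a1 = - b2)%R) by (apply (f_equal snd) in E; simpl in E; lra).
  pose proof (Rle_abs (a1 + - (1))). pose proof (Rle_abs (- (a1 + - (1)))). rewrite Rabs_Ropp in H4.
  pose proof (Rle_abs a2). pose proof (Rle_abs (- a2)). rewrite Rabs_Ropp in H6.
  pose proof (Rle_abs (b1 + - (1))). pose proof (Rle_abs (- (b1 + - (1)))). rewrite Rabs_Ropp in H8.
  pose proof (Rle_abs b2). pose proof (Rle_abs (- b2)). rewrite Rabs_Ropp in H10.
  assert (-1/2 < a2 < 1/2)%R by (split; lra).
  assert (-1/2 < b2 < 1/2)%R by (split; lra).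
  assert (1/2 < a1)%R by lra. assert (1/2 < b1)%R by lra.
  assert (Q : (X * (a1 * a1 + a2 * a2) = - (a1 * b1 + a2 * b2))%R).
  { transitivity (a1 * (X * a1 - Y * a2) + a2 * (X * a2 + Y * a1))%R; [ring|].
    rewrite E1, E2. ring. }
  assert (P1 : (0 < a1 * b1 + a2 * b2)%R) by nra.
  assert (P2 : (0 < a1 * a1 + a2 * a2)%R) by nra.
  nra.
Qed.

Lemma ctd_Im_cont (g : R -> C) t : ctd dR g t -> continuity_pt (fun y => Im (g y)) t.
Proof.
  intros H e He. destruct (H e He) as [d [Hd H1]]. exists d. split; auto.
  intros x [_ Hx]. simpl in *. unfold R_dist in *.
  eapply Rle_lt_trans; [|apply (H1 x Hx)].
  replace (Im (g x) - Im (g t))%R with (Im (g x - g t)) by (destruct (g x), (g t); simpl; ring).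
  apply Im_le_Cmod.
Qed.

Lemma final_contra (W F : C -> C) z0 r lam : (0 < r)%R -> disk_ok W z0 r ->
  (forall z, (Cmod (z - z0) <= r)%R -> ctd dC F z) ->
  (forall t, (0 <= t <= PI)%R ->
     (Cmod (lam * (W (cpt z0 r 1 t) * (F (cpt z0 r 1 t) * F (cpt z0 r 1 t))) - (cpt z0 r 1 t - z0)) < r / 2)%R /\
     (Cmod (lam * (W (cmt z0 r 1 t) * (F (cmt z0 r 1 t) * F (cmt z0 r 1 t))) - (cmt z0 r 1 t - z0)) < r / 2)%R) ->
  False.
Proof.
  intros Hr HW HF Happ.
  destruct (homotopy W z0 r Hr HW) as [sg [Hc [Hsq Hend]]].
  pose proof PI_RGT_0 as HPI.
  set (v := fun t => RtoC (1 * r) * ee t).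
  assert (Hv : forall t, Cmod (v t) = r).
  { intro t. unfold v. rewrite Cmod_mult, Cmod_ee, Cmod_R, Rmult_1_l, Rmult_1_r. apply Rabs_pos_eq; lra. }
  assert (Hvn : forall t, v t <> 0). { intros t Z. specialize (Hv t). rewrite Z, Cmod_0 in Hv. lra. }
  assert (EP : forall t, cpt z0 r 1 t - z0 = v t) by (intro; unfold cpt, v; ring).
  assert (EM : forall t, cmt z0 r 1 t - z0 = - v t) by (intro; unfold cmt, v; ring).
  set (G := fun z => lam * (W z * (F z * F z))).
  assert (Key : forall t, (0 <= t <= PI)%R ->
     (Cmod (G (cpt z0 r 1 t) / v t - 1) < 1/2)%R /\ (Cmod (G (cmt z0 r 1 t) / (- v t) - 1) < 1/2)%R /\
     G (cpt z0 r 1 t) <> 0 /\ G (cmt z0 r 1 t) <> 0).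
  { intros t Ht. destruct (Happ t Ht) as [A1 A2]. fold (G (cpt z0 r 1 t)) in A1.
    fold (G (cmt z0 r 1 t)) in A2. rewrite EP in A1. rewrite EM in A2.
    assert (Hmv : (Cmod (- v t) = r)%R) by (rewrite Cmod_opp; auto).
    assert (Hmvn : - v t <> 0). { intro Z. rewrite Z, Cmod_0 in Hmv. lra. }
    split; [|split; [|split]].
    - replace (G (cpt z0 r 1 t) / v t - 1) with ((G (cpt z0 r 1 t) - v t) / v t) by (field; auto).
      rewrite Cmod_div, Hv by auto. apply (Rmult_lt_reg_r r); [lra|].
      unfold Rdiv at 1. rewrite Rmult_assoc, Rinv_l by lra. lra.
    - replace (G (cmt z0 r 1 t) / - v t - 1) with ((G (cmt z0 r 1 t) - - v t) / - v t) by (field; auto).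
      rewrite Cmod_div, Hmv by auto. apply (Rmult_lt_reg_r r); [lra|].
      unfold Rdiv at 1. rewrite Rmult_assoc, Rinv_l by lra. lra.
    - intro Z. rewrite Z in A1. replace (0 - v t) with (- v t) in A1 by ring.
      rewrite Cmod_opp, Hv in A1. lra.
    - intro Z. rewrite Z in A2. replace (0 - - v t) with (v t) in A2 by ring.
      rewrite Hv in A2. lra. }
  assert (NZ : forall t, (0 <= t <= PI)%R ->
    lam <> 0 /\ W (cpt z0 r 1 t) <> 0 /\ W (cmt z0 r 1 t) <> 0 /\ F (cpt z0 r 1 t) <> 0 /\ F (cmt z0 r 1 t) <> 0).
  { intros t Ht. destruct (Key t Ht) as [_ [_ [N1 N2]]]. unfold G in N1, N2.
    split; [intro Z; apply N1; rewrite Z; ring|].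
    split; [intro Z; apply N1; rewrite Z; ring|].
    split; [intro Z; apply N2; rewrite Z; ring|].
    split; [intro Z; apply N1; rewrite Z; ring|].
    intro Z; apply N2; rewrite Z; ring. }
  set (tau := fun t => sg t * (F (cmt z0 r 1 t) / F (cpt z0 r 1 t))).
  assert (Tneg : forall t, (0 <= t <= PI)%R -> (Re (tau t * tau t) < 0)%R).
  { intros t Ht. destruct (Key t Ht) as [K1 [K2 _]]. destruct (NZ t Ht) as [N0 [N1 [N2 [N3 N4]]]].
    apply (sq_neg_re _ _ _ K1 K2).
    transitivity ((sg t * sg t) * (F (cmt z0 r 1 t) / F (cpt z0 r 1 t)) * (F (cmt z0 r 1 t) / F (cpt z0 r 1 t)) * (G (cpt z0 r 1 t) / v t)).
    { unfold tau. ring. }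
    rewrite Hsq by auto. unfold G. field. repeat split; auto. }
  assert (Tim : forall t, (0 <= t <= PI)%R -> Im (tau t) <> 0%R).
  { intros t Ht Z. pose proof (Tneg t Ht). destruct (tau t) as [x y]. simpl in *. rewrite Z in H. nra. }
  assert (Tc : forall t, (0 <= t <= PI)%R -> continuity_pt (fun y => Im (tau y)) t).
  { intros t Ht. apply ctd_Im_cont. unfold tau. destruct (NZ t Ht) as [_ [_ [_ [N3 N4]]]].
    apply ctd_mult; [apply Hc; auto|]. apply ctd_div; auto.
    - apply ctd_comp; [apply ctd_cmt|]. apply HF. apply cmt_dist; lra.
    - apply ctd_comp; [apply ctd_cpt|]. apply HF. apply cpt_dist; lra. }
  assert (Hsign : (0 < Im (tau 0%R) * Im (tau PI))%R).
  { destruct (Rlt_le_dec 0 (Im (tau 0%R) * Im (tau PI))) as [H|H]; auto. exfalso.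
    assert (Z0 := Tim 0%R ltac:(lra)). assert (Z1 := Tim PI ltac:(lra)).
    destruct (Rlt_le_dec (Im (tau 0%R)) 0) as [L|L].
    - assert (0 < Im (tau PI))%R.
      { destruct (Rlt_le_dec 0 (Im (tau PI))); auto. exfalso. apply Z1. nra. }
      destruct (Ranalysis5.IVT_interv (fun y => Im (tau y)) 0 PI) as [z [Hz Ez]]; auto.
      apply (Tim z Hz Ez).
    - assert (0 < Im (tau 0%R))%R by (destruct L; auto; exfalso; apply Z0; auto).
      assert (Im (tau PI) < 0)%R.
      { destruct (Rlt_le_dec (Im (tau PI)) 0); auto. exfalso. apply Z1. nra. }
      destruct (Ranalysis5.IVT_interv (fun y => - Im (tau y))%R 0 PI) as [z [Hz Ez]]; try lra.
      + intros a Ha. apply continuity_pt_opp. apply Tc. auto.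
      + apply (Tim z Hz). lra. }
  assert (Hprod : tau 0%R * tau PI = 1).
  { unfold tau. rewrite cmt_PI, cpt_PI. destruct (NZ 0%R ltac:(lra)) as [_ [_ [_ [N3 N4]]]].
    transitivity ((sg 0%R * sg PI) * ((F (cmt z0 r 1 0) / F (cpt z0 r 1 0)) * (F (cpt z0 r 1 0) / F (cmt z0 r 1 0)))); [ring|].
    rewrite Hend. field. auto. }
  pose proof (Tneg 0%R ltac:(lra)) as T0. pose proof (Tneg PI ltac:(lra)) as T1.
  destruct (tau 0%R) as [x y], (tau PI) as [x' y']. simpl in *.
  apply (f_equal fst) in Hprod. simpl in Hprod.
  assert (Q1 : (x * x < y * y)%R) by nra. assert (Q2 : (x' * x' < y' * y')%R) by nra.
  assert (Q3 : ((x * x') * (x * x') < (y * y') * (y * y'))%R).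
  { replace ((x * x') * (x * x'))%R with ((x * x) * (x' * x'))%R by ring.
    replace ((y * y') * (y * y'))%R with ((y * y) * (y' * y'))%R by ring.
    apply Rmult_le_0_lt_compat; try nra. }
  nra.
Qed.

Lemma hol_ctd (f : C -> C) (z : C) :
  @ex_derive C_AbsRing C_NormedModule f z -> ctd dC f z.
Proof.
  intros H. apply ex_derive_continuous in H.
  intros e He.
  assert (Hl : locally (f z) (fun v : C => (Cmod (v - f z) < e)%R)).
  { exists (mkposreal (e/2) ltac:(lra)). intros y [B1 B2]. simpl in B1, B2.
    eapply Rle_lt_trans; [apply Cmod_le_sum|]. destruct y as [r r0], (f z) as [r1 r2]. simpl in *.
    change (Rabs (r - r1) < e / 2)%R in B1. change (Rabs (r0 - r2) < e / 2)%R in B2.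
    unfold Rminus in *. lra. }
  specialize (H _ Hl). destruct H as [eps Heps].
  exists eps. split; [apply cond_pos|]. intros y Hy. apply (Heps y).
  exact Hy.
Qed.

Lemma open_ball (D : C -> Prop) z : open D -> D z ->
  exists rh, (0 < rh)%R /\ forall y, (Cmod (y - z) < rh)%R -> D y.
Proof.
  intros HO Hz. destruct (HO z Hz) as [eps Heps]. exists eps. split; [apply cond_pos|].
  intros y Hy. apply Heps. destruct y as [a b], z as [c d]. split.
  - change (Rabs (a - c) < eps)%R. pose proof (Re_le_Cmod ((a,b) - (c,d))). simpl in *.
    unfold Rminus in *. lra.
  - change (Rabs (b - d) < eps)%R. pose proof (Im_le_Cmod ((a,b) - (c,d))). simpl in *.
    unfold Rminus in *. lra.
Qed.

Lemma compact_two (g1 g2 : R -> C) (a b : R) : (a <= b)%R ->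
  (forall t, (a <= t <= b)%R -> ctd dR g1 t /\ ctd dR g2 t) ->
  compact_set (fun z => exists t, (a <= t <= b)%R /\ (z = g1 t \/ z = g2 t)).
Proof.
  intros Hab Hg I U HU Hcov.
  set (Q := fun t (del : posreal) => (a <= t <= b)%R -> exists i1 i2,
     forall s, (Rabs (s - t) < del)%R -> U i1 (g1 s) /\ U i2 (g2 s)).
  assert (HQ : forall t, exists del, Q t del).
  { intros t. destruct (classic ((a <= t <= b)%R)) as [Ht|Hn].
    - destruct (Hcov (g1 t)) as [i1 Hi1]; [exists t; auto|].
      destruct (Hcov (g2 t)) as [i2 Hi2]; [exists t; auto|].
      destruct (open_ball _ _ (HU i1) Hi1) as [r1 [Hr1 R1]].
      destruct (open_ball _ _ (HU i2) Hi2) as [r2 [Hr2 R2]].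
      destruct (Hg t Ht) as [C1 C2].
      destruct (C1 r1 Hr1) as [d1 [Hd1 D1]]. destruct (C2 r2 Hr2) as [d2 [Hd2 D2]].
      exists (mkposreal (Rmin d1 d2) (Rmin_pos _ _ Hd1 Hd2)). intros _. exists i1, i2.
      intros s Hs. simpl in Hs. split.
      + apply R1. apply D1. unfold dR. eapply Rlt_le_trans; [apply Hs|apply Rmin_l].
      + apply R2. apply D2. unfold dR. eapply Rlt_le_trans; [apply Hs|apply Rmin_r].
    - exists (mkposreal 1 Rlt_0_1). intro. contradiction. }
  set (delta := fun t => proj1_sig (constructive_indefinite_description _ (HQ t))).
  assert (Hdelta : forall t, Q t (delta t)).
  { intros t. unfold delta. apply (proj2_sig (constructive_indefinite_description _ (HQ t))). }
  assert (Hpos : forall t, (0 < delta t / 2)%R) by (intro t; pose proof (cond_pos (delta t)); lra).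
  destruct (compactness_value_1d a b (fun t => mkposreal _ (Hpos t))) as [d Hd].
  simpl in Hd. pose proof (cond_pos d) as Hd0.
  assert (Local : forall y, (a <= y <= b)%R -> exists i1 i2, forall x, (Rabs (x - y) < d / 2)%R ->
     U i1 (g1 x) /\ U i2 (g2 x)).
  { intros y Hy. apply NNPP. intro Hn. apply (Hd y Hy). intros [t [Ht [H1 H2]]]. apply Hn.
    destruct (Hdelta t Ht) as [i1 [i2 Hi]]. exists i1, i2. intros x Hx. apply Hi.
    assert (Rabs (x - t) <= Rabs (x - y) + Rabs (y - t))%R.
    { replace (x - t)%R with ((x - y) + (y - t))%R by ring. apply Rabs_triang. }
    pose proof (cond_pos (delta t)). lra. }
  assert (Cl : forall N : nat, exists l : list I, forall x, (a <= x <= b)%R ->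
     (x <= a + INR N * (d / 2))%R ->
     (exists i, In i l /\ U i (g1 x)) /\ (exists i, In i l /\ U i (g2 x))).
  { induction N.
    - destruct (Local a ltac:(lra)) as [i1 [i2 Hi]]. exists (i1 :: i2 :: nil).
      intros x Hx Hxa. simpl in Hxa. replace x with a in * by lra.
      destruct (Hi a) as [A1 A2]. { replace (a - a)%R with 0%R by ring. rewrite Rabs_R0. lra. }
      split; [exists i1|exists i2]; simpl; auto.
    - destruct IHN as [l Hl].
      set (y := Rmin b (a + INR (S N) * (d / 2))).
      assert (Hy : (a <= y <= b)%R).
      { unfold y. split; [apply Rmin_glb; auto; pose proof (pos_INR (S N)); nra|apply Rmin_l]. }
      destruct (Local y Hy) as [i1 [i2 Hi]]. exists (i1 :: i2 :: l).
      intros x Hx Hxa. destruct (Rle_dec x (a + INR N * (d / 2))) as [Le|Gt].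
      + destruct (Hl x Hx Le) as [[i [Hi1 Hi2]] [j [Hj1 Hj2]]].
        split; [exists i|exists j]; simpl; auto.
      + destruct (Hi x) as [A1 A2].
        { assert (x <= y)%R by (unfold y; apply Rmin_glb; lra).
          assert (y <= a + INR (S N) * (d / 2))%R by (unfold y; apply Rmin_r).
          rewrite S_INR, Rmult_plus_distr_r in H0. apply Rnot_le_lt in Gt.
          rewrite Rabs_minus_sym, Rabs_pos_eq by lra. lra. }
        split; [exists i1|exists i2]; simpl; auto. }
  destruct (INR_unbounded ((b - a) / (d / 2))) as [N HN].
  destruct (Cl N) as [l Hl]. exists l. intros z [t [Ht [E|E]]]; subst z.
  - assert (t <= a + INR N * (d / 2))%R.
    { apply (Rmult_lt_compat_r (d/2)) in HN; [|lra].
      replace ((b - a) / (d / 2) * (d / 2))%R with (b - a)%R in HN by (field; lra). lra. }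
    apply (Hl t Ht H).
  - assert (t <= a + INR N * (d / 2))%R.
    { apply (Rmult_lt_compat_r (d/2)) in HN; [|lra].
      replace ((b - a) / (d / 2) * (d / 2))%R with (b - a)%R in HN by (field; lra). lra. }
    apply (Hl t Ht H).
Qed.

Fixpoint Wn (w phi : C -> C) (n : nat) (z : C) : C :=
  match n with O => 1 | S m => w z * Wn w phi m (phi z) end.
Fixpoint Phn (phi : C -> C) (n : nat) (z : C) : C :=
  match n with O => z | S m => Phn phi m (phi z) end.

Lemma iter_formula w phi n h z :
  Nat.iter n (wcomp w phi) h z = Wn w phi n z * h (Phn phi n z).
Proof.
  revert z. induction n; intros z; simpl.
  - ring.
  - unfold wcomp at 1. rewrite IHn. ring.
Qed.

Lemma Phn_in (Omega : C -> Prop) phi : (forall z, Omega z -> Omega (phi z)) ->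
  forall n z, Omega z -> Omega (Phn phi n z).
Proof. intros H n. induction n; intros z Hz; simpl; auto. Qed.

Lemma Phn_ctd (Omega : C -> Prop) phi : (forall z, Omega z -> Omega (phi z)) ->
  (forall z, Omega z -> ctd dC phi z) -> forall n z, Omega z -> ctd dC (Phn phi n) z.
Proof.
  intros H Hc n. induction n; intros z Hz; simpl.
  - apply ctd_id_C.
  - apply (ctd_comp dC phi (Phn phi n) z); auto.
Qed.

Lemma Wn_ok (Omega : C -> Prop) w phi : (forall z, Omega z -> Omega (phi z)) ->
  (forall z, Omega z -> ctd dC phi z) -> (forall z, Omega z -> ctd dC w z /\ w z <> 0) ->
  forall n z, Omega z -> ctd dC (Wn w phi n) z /\ Wn w phi n z <> 0.
Proof.
  intros H Hc Hw n. induction n; intros z Hz; simpl.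
  - split; [apply ctd_const|]. intro Z. apply RtoC_inj in Z. lra.
  - destruct (Hw z Hz) as [C1 N1]. destruct (IHn (phi z) (H z Hz)) as [C2 N2].
    split; [|apply Cmult_neq_0; auto].
    apply ctd_mult; auto. apply (ctd_comp dC phi (Wn w phi n) z); auto.
Qed.

Lemma compact_pair (p q : C) : compact_set (fun z => z = p \/ z = q).
Proof.
  intros I U HU Hcov.
  destruct (Hcov p (or_introl eq_refl)) as [i1 H1].
  destruct (Hcov q (or_intror eq_refl)) as [i2 H2].
  exists (i1 :: i2 :: nil). intros z [->| ->]; [exists i1|exists i2]; simpl; auto.
Qed.

Lemma hol_affine (D : C -> Prop) (c p k : C) : holomorphic_on D (fun z => c + (z - p) * k).
Proof.
  intros z _.
  apply (ex_derive_plus (K := C_AbsRing) (V := C_NormedModule) (fun _ => c) (fun z => (z - p) * k)).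
  - apply ex_derive_const.
  - apply (ex_derive_scal_l (K := C_AbsRing) (V := C_NormedModule) (fun z => z - p)).
    apply (ex_derive_plus (K := C_AbsRing) (V := AbsRing_NormedModule C_AbsRing) (fun z => z) (fun _ => - p)).
    + apply ex_derive_id.
    + apply ex_derive_const.
Qed.

Lemma caseA (Omega : C -> Prop) (w phi f : C -> C) (p : C) :
  open Omega -> Omega p -> w p = 0 -> supercyclic Omega (wcomp w phi) f -> False.
Proof.
  intros Hop Hp Hwp Hsc.
  destruct (open_ball Omega p Hop Hp) as [rh [Hrh Hb]].
  set (q := p + RtoC (rh / 2)).
  assert (Hqp : q - p = RtoC (rh / 2)) by (unfold q; ring).
  assert (Hq : Omega q).
  { apply Hb. rewrite Hqp, Cmod_R, Rabs_pos_eq; lra. }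
  assert (Hqpn : q - p <> 0). { rewrite Hqp. intro Z. apply RtoC_inj in Z. lra. }
  assert (Hit : forall n lam, n = O \/ lam * Nat.iter n (wcomp w phi) f p = 0).
  { intros n lam. destruct n; [left; auto|right]. rewrite iter_formula. simpl. rewrite Hwp. ring. }
  assert (HK : forall z, z = p \/ z = q -> Omega z) by (intros z [->| ->]; auto).
  destruct (classic (f p = 0)) as [Z|NZ].
  - destruct (Hsc (fun z => 1 + (z - p) * 0) (hol_affine _ _ _ _) _ (compact_pair p q) HK (1/2)%R)
      as [lam [n Hn]]; [lra|].
    specialize (Hn p (or_introl eq_refl)).
    assert (E : lam * Nat.iter n (wcomp w phi) f p = 0).
    { destruct (Hit n lam) as [->|E]; auto. simpl. rewrite Z. ring. }
    rewrite E in Hn. replace (0 - (1 + (p - p) * 0)) with (- (1)) in Hn by ring.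
    rewrite Cmod_opp, Cmod_1 in Hn. lra.
  - set (B := (3 / 2 * Cmod (f q) / Cmod (f p))%R).
    pose proof (Cmod_nz _ NZ) as Pp.
    assert (HB : (0 <= B)%R).
    { unfold B. apply Rmult_le_pos; [pose proof (Cmod_ge_0 (f q)); lra|].
      left. apply Rinv_0_lt_compat. auto. }
    set (k := RtoC (3 + B) / (q - p)).
    destruct (Hsc (fun z => 1 + (z - p) * k) (hol_affine _ _ _ _) _ (compact_pair p q) HK (1/2)%R)
      as [lam [n Hn]]; [lra|].
    pose proof (Hn p (or_introl eq_refl)) as Hnp. pose proof (Hn q (or_intror eq_refl)) as Hnq.
    replace (1 + (p - p) * k) with (RtoC 1) in Hnp by ring.
    replace (1 + (q - p) * k) with (RtoC (4 + B)) in Hnq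
      by (unfold k; replace ((q - p) * (RtoC (3 + B) / (q - p))) with (RtoC (3 + B)) by (field; auto);
          apply C_ext; simpl; ring).
    destruct (Hit n lam) as [->|E].
    2:{ rewrite E in Hnp. replace (0 - RtoC 1) with (- (1)) in Hnp by ring.
        rewrite Cmod_opp, Cmod_1 in Hnp. lra. }
    simpl in Hnp, Hnq.
    assert (L1 : (Cmod lam * Cmod (f p) < 3 / 2)%R).
    { rewrite <- Cmod_mult. pose proof (Cmod_triangle (lam * f p - 1) 1).
      replace (lam * f p - 1 + 1) with (lam * f p) in H by ring. rewrite Cmod_1 in H. lra. }
    assert (L2 : (Cmod lam * Cmod (f q) <= B)%R).
    { unfold B. assert (Cmod lam < 3 / 2 / Cmod (f p))%R.
      { apply (Rmult_lt_reg_r (Cmod (f p))); auto. unfold Rdiv. rewrite Rmult_assoc, Rinv_l by lra. lra. }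
      pose proof (Cmod_ge_0 (f q)).
      replace (3 / 2 * Cmod (f q) / Cmod (f p))%R with (3 / 2 / Cmod (f p) * Cmod (f q))%R by (field; lra).
      nra. }
    pose proof (Cmod_rev_tri (RtoC (4 + B)) (lam * f q)).
    rewrite Cmod_sub_sym, Cmod_R, Cmod_mult, Rabs_pos_eq with (x := (4 + B)%R) in H by lra.
    pose proof (Rle_abs (4 + B - Cmod lam * Cmod (f q))). lra.
Qed.

Theorem theorem22 (Omega : C -> Prop) (w phi : C -> C) :
  is_domain Omega ->
  holomorphic_on Omega w ->
  holomorphic_on Omega phi ->
  (forall z, Omega z -> Omega (phi z)) ->
  ~ supports_supercyclic_algebra Omega (wcomp w phi).
Proof.
  intros [Hop [_ [z0 Hz0]]] Hw Hphi Hmap [A [[HAh [HA0 [HAadd [HAsc HAmul]]]] [[f [Hf Hfnz]] Hsc]]].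
  destruct (classic (exists p, Omega p /\ w p = 0)) as [[p [Hp Hwp]]|Hnw].
  { exact (caseA Omega w phi f p Hop Hp Hwp (Hsc f Hf Hfnz)). }
  assert (Hw0 : forall z, Omega z -> ctd dC w z /\ w z <> 0).
  { intros z Hz. split; [apply hol_ctd, Hw; auto|]. intro Z. apply Hnw. exists z; auto. }
  assert (Hphic : forall z, Omega z -> ctd dC phi z) by (intros; apply hol_ctd, Hphi; auto).
  assert (Hfc : forall z, Omega z -> ctd dC f z) by (intros; apply hol_ctd, (HAh f Hf); auto).
  destruct (open_ball Omega z0 Hop Hz0) as [rh [Hrh Hb]].
  set (r := (rh / 2)%R). assert (Hr : (0 < r)%R) by (unfold r; lra).
  assert (Hdisk : forall z, (Cmod (z - z0) <= r)%R -> Omega z) by (intros; apply Hb; unfold r in *; lra).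
  set (h := fun z => f z * f z).
  assert (Hh : A h) by (apply HAmul; auto).
  assert (Hhnz : nonzero_on Omega h).
  { destruct Hfnz as [z1 [Hz1 N1]]. exists z1. split; auto. unfold h. apply Cmult_neq_0; auto. }
  pose proof (Hsc h Hh Hhnz) as Hsch.
  assert (HK : compact_set (fun z => exists t, (0 <= t <= PI)%R /\ (z = cpt z0 r 1 t \/ z = cmt z0 r 1 t))).
  { apply compact_two. pose proof PI_RGT_0; lra. intros; split; [apply ctd_cpt|apply ctd_cmt]. }
  assert (HKO : forall z, (exists t, (0 <= t <= PI)%R /\ (z = cpt z0 r 1 t \/ z = cmt z0 r 1 t)) -> Omega z).
  { intros z [t [Ht [-> | ->]]]; apply Hdisk; [apply cpt_dist|apply cmt_dist]; lra. }
  destruct (Hsch (fun z => 0 + (z - z0) * 1) (hol_affine _ _ _ _) _ HK HKO (r / 2)%R) as [lam [n Hn]]; [lra|].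
  apply (final_contra (Wn w phi n) (fun z => f (Phn phi n z)) z0 r lam Hr).
  - intros z Hz. apply (Wn_ok Omega w phi Hmap Hphic Hw0). auto.
  - intros z Hz. apply (ctd_comp dC (Phn phi n) f z).
    + apply (Phn_ctd Omega phi Hmap Hphic). auto.
    + apply Hfc. apply (Phn_in Omega phi Hmap). auto.
  - intros t Ht. split.
    + pose proof (Hn (cpt z0 r 1 t) ltac:(exists t; auto)) as E.
      rewrite iter_formula in E. unfold h in E.
      replace (0 + (cpt z0 r 1 t - z0) * 1) with (cpt z0 r 1 t - z0) in E by ring.
      replace (lam * (Wn w phi n (cpt z0 r 1 t) * (f (Phn phi n (cpt z0 r 1 t)) * f (Phn phi n (cpt z0 r 1 t)))))
        with (lam * (Wn w phi n (cpt z0 r 1 t) * (f (Phn phi n (cpt z0 r 1 t)) * f (Phn phi n (cpt z0 r 1 t))))) by ring.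
      exact E.
    + pose proof (Hn (cmt z0 r 1 t) ltac:(exists t; auto)) as E.
      rewrite iter_formula in E. unfold h in E.
      replace (0 + (cmt z0 r 1 t - z0) * 1) with (cmt z0 r 1 t - z0) in E by ring.
      exact E.
Qed.
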